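(* Let $\mathcal G$ be a rooted digraph, $T>0$, $r\in(0,1)^N$, $\xi\in\Xi$, and $\mathcal A:=\mathcal A_s\times\mathbb Z_{\ge0}$. If $\xi$ contains the synchronization string $\zeta$ (with respect to some root $i^*$) infinitely often, then $\mathcal H_\xi$ renders $\mathcal A$ uniformly globally stable (UGS) and globally finite-time attractive (GFTA). If $\xi$ contains $\zeta$ uniformly infinitely often, then $\mathcal H_\xi$ renders $\mathcal A$ UGS and globally fixed-time attractive (GFxTA).
   Context: $\mathcal G=(\mathcal V,\mathcal E)$ is a simple digraph on $\mathcal V=\{1,\dots,N\}$; $(i,j)\in\mathcal E$ means $j$ is an out-neighbor of $i$; $\mathcal E_i^-$ is the set of out-edges of $i$. A path is a sequence of pairwise distinct vertices with consecutive pairs in $\mathcal E$, its length the number of edges. A root is a vertex from which every other vertex is reachable; rooted means a root exists. For a root $i^*$, $\mathcal V_q(i^* )$ is the set of vertices at shortest-path distance $q$ from $i^*$ and $q^*$ the maximal distance. $\underline r=\min_ir_i$, $\ell^*:=N(\lfloor1/\underline r\rfloor+1)$. A subgraph $(\mathcal V,\mathcal E')$, $\mathcal E'\subseteq\mathcal E$, is feasible if for every $i$ either $\mathcal E_i^-\subseteq\mathcal E'$ or $\mathcal E_i^-\cap\mathcal E'=\varnothing$. $\Xi$ is the set of infinite sequences $\xi=\phi_1\phi_2\cdots$ of feasible subgraphs, $\phi_\lambda=(\mathcal V,\mathcal E_\lambda)$. With $\mathcal G_q=(\mathcal V,\bigcup_{i\in\mathcal V_q(i^* )}\mathcal E_i^-)$,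 the synchronization string w.r.t. $i^*$ is $\zeta=\mathcal G_0\cdots\mathcal G_0\cdots\mathcal G_{q^*-1}\cdots\mathcal G_{q^*-1}$, each $\mathcal G_q$ repeated consecutively $\ell^*$ times. $\xi$ contains $\zeta$ infinitely often if it has infinitely many pairwise disjoint blocks of consecutive terms equal to $\zeta$; uniformly infinitely often if there is $n\in\mathbb Z_{>0}$ such that every block of $n$ consecutive terms of $\xi$ contains $\zeta$ as a block. Hybrid system $\mathcal H_\xi$: state $x=(\tau,\lambda)\in\mathbb R^N_{\ge0}\times\mathbb Z_{\ge0}$; flow set $C=[0,1]^N\times\mathbb Z_{\ge0}$ with $\dot\tau=\frac1T\mathbf 1_N$, $\dot\lambda=0$; jump set $D=\{\tau\in[0,1]^N:\max_i\tau_i=1\}\times\mathbb Z_{\ge0}$ with $x^+\in G_{\lambda+1}(\tau)\times\{\lambda+1\}$, where $G_\lambda$ is the outer-semicontinuous hull of $G_\lambda^0(\tau)=\{g:g_i=0,\ g_j\in\mathcal R_{j,\lambda}(\tau)\ \forall j\ne i\}$, $i$ an agent with $\tau_i=1$, and $\mathcal R_{j,\lambda}(\tau)=\{0\}$, $\{0,1\}$, $\{1\}$ if $(i,j)\in\mathcal E_\lambda$ and $\tau_j<r_j$, $=r_j$, $>r_j$ respectively, and $\{\tau_j\}$ if $(i,j)\notin\mathcal E_\lambda$. Solutions are hybrid arcs on hybrid time domains (unions of $[t_k,t_{k+1}]\times\{k\}$) that flow in $C$ according to the flow map and jump from $D$ via the jump map. $\mathcal A_s:=\{\mu\mathbf 1_N:\mu\in[0,1]\}\cup\{0,1\}^N$;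 $|x|_{\mathcal A}$ is the Euclidean distance from $x$ (viewed in $\mathbb R^{N+1}$) to $\mathcal A$. $\mathcal H_\xi$ renders $\mathcal A$: UGS if there is a class-$\mathcal K_\infty$ function $\alpha$ with $|x(t,k)|_{\mathcal A}\le\alpha(|x(0,0)|_{\mathcal A})$ for every solution and all $(t,k)\in\operatorname{dom}x$; GFTA if for each solution $x$ there is $\bar T(x(0,0))>0$ with $|x(t,k)|_{\mathcal A}=0$ for all $(t,k)\in\operatorname{dom}x$ with $t+k\ge\bar T(x(0,0))$; GFxTA if it is GFTA with $\bar T$ a constant independent of $x(0,0)$. *)

(* Defs.v *)
From Stdlib Require Import Reals List Lia Lra.
From Coquelicot Require Import Rbar Lub.
Open Scope R_scope.

(** * Digraphs on vertices 0..N-1; an edge relation E : nat -> nat -> Prop,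
    E i j meaning (i,j) is an edge, i.e. j is an out-neighbour of i. *)

Definition simple_digraph (N : nat) (E : nat -> nat -> Prop) : Prop :=
  forall i j, E i j -> (i < N)%nat /\ (j < N)%nat /\ i <> j.

Fixpoint chain (E : nat -> nat -> Prop) (l : list nat) : Prop :=
  match l with
  | a :: ((b :: _) as t) => E a b /\ chain E t
  | _ => True
  end.

Definition is_path (E : nat -> nat -> Prop) (a b : nat) (q : nat) : Prop :=
  exists l : list nat, NoDup l /\ chain E l /\ hd_error l = Some a /\
    last l a = b /\ length l = S q.

Definition is_root (N : nat) (E : nat -> nat -> Prop) (i : nat) : Prop :=
  (i < N)%nat /\ forall j, (j < N)%nat -> exists q, is_path E i j q.

Definition rooted (N : nat) (E : nat -> nat -> Prop) : Prop :=
  exists i, is_root N E i.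

Definition sp_dist (E : nat -> nat -> Prop) (i j q : nat) : Prop :=
  is_path E i j q /\ forall q', is_path E i j q' -> (q <= q')%nat.

Definition in_Vq (N : nat) (E : nat -> nat -> Prop) (istar q j : nat) : Prop :=
  (j < N)%nat /\ sp_dist E istar j q.

Definition is_qstar (N : nat) (E : nat -> nat -> Prop) (istar qs : nat) : Prop :=
  (exists j, in_Vq N E istar qs j) /\
  forall j q, in_Vq N E istar q j -> (q <= qs)%nat.

Definition feasible (E E' : nat -> nat -> Prop) : Prop :=
  (forall a b, E' a b -> E a b) /\
  forall i, (forall j, E i j -> E' i j) \/ (forall j, E i j -> ~ E' i j).

(* xi n is the (n+1)-th term phi_{n+1} of the sequence xi = phi_1 phi_2 ... *)
Definition in_Xi (E : nat -> nat -> Prop) (xi : nat -> nat -> nat -> Prop) : Prop :=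
  forall n, feasible E (xi n).

Fixpoint minR (n : nat) (r : nat -> R) (acc : R) : R :=
  match n with
  | O => acc
  | S m => Rmin (minR m r acc) (r m)
  end.

Definition rmin (N : nat) (r : nat -> R) : R := minR N r (r O).

Definition lstar (N : nat) (r : nat -> R) : nat :=
  (N * (Z.to_nat (Int_part (/ rmin N r)) + 1))%nat.

Definition Gq (N : nat) (E : nat -> nat -> Prop) (istar q : nat) : nat -> nat -> Prop :=
  fun a b => in_Vq N E istar q a /\ E a b.

(* the block of xi starting at position p equals zeta = G_0^{l*} ... G_{q*-1}^{l*} *)
Definition zeta_at (N : nat) (E : nat -> nat -> Prop) (r : nat -> R) (istar qs : nat)
    (xi : nat -> nat -> nat -> Prop) (p : nat) : Prop :=
  forall q m, (q < qs)%nat -> (m < lstar N r)%nat ->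
    forall a b, xi (p + q * lstar N r + m)%nat a b <-> Gq N E istar q a b.

(* xi contains zeta (w.r.t. some root istar) infinitely often:
   infinitely many pairwise disjoint occurrences *)
Definition contains_io (N : nat) (E : nat -> nat -> Prop) (r : nat -> R)
    (xi : nat -> nat -> nat -> Prop) : Prop :=
  exists istar qs, is_root N E istar /\ is_qstar N E istar qs /\
  exists pos : nat -> nat,
    (forall n, (pos n + qs * lstar N r <= pos (S n))%nat) /\
    (forall n, zeta_at N E r istar qs xi (pos n)).

(* uniformly infinitely often: every window of n consecutive terms contains zeta *)
Definition contains_uio (N : nat) (E : nat -> nat -> Prop) (r : nat -> R)
    (xi : nat -> nat -> nat -> Prop) : Prop :=
  exists istar qs, is_root N E istar /\ is_qstar N E istar qs /\
  exists n : nat, (0 < n)%nat /\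
    forall s, exists p, (s <= p)%nat /\ (p + qs * lstar N r <= s + n)%nat /\
      zeta_at N E r istar qs xi p.

(* state x = (tau, lambda); only coordinates 0..N-1 of tau are meaningful *)
Definition State : Type := ((nat -> R) * nat)%type.

Definition inC (N : nat) (x : State) : Prop :=
  forall i, (i < N)%nat -> 0 <= fst x i <= 1.

Definition inD (N : nat) (x : State) : Prop :=
  inC N x /\ exists i, (i < N)%nat /\ fst x i = 1.

(* v in R_{j,lambda}(tau) when agent i fires, El = edge set E_lambda *)
Definition Rset (El : nat -> nat -> Prop) (r : nat -> R) (i : nat) (tau : nat -> R)
    (j : nat) (v : R) : Prop :=
  (El i j -> (tau j < r j /\ v = 0) \/ (tau j = r j /\ (v = 0 \/ v = 1)) \/
             (tau j > r j /\ v = 1)) /\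
  (~ El i j -> v = tau j).

(* graph of G^0_lambda (defined on the tau-projection of D) *)
Definition G0graph (N : nat) (r : nat -> R) (El : nat -> nat -> Prop)
    (tau g : nat -> R) : Prop :=
  (forall i, (i < N)%nat -> 0 <= tau i <= 1) /\
  exists i, (i < N)%nat /\ tau i = 1 /\ g i = 0 /\
    forall j, (j < N)%nat -> j <> i -> Rset El r i tau j (g j).

(* G_lambda: outer-semicontinuous hull (graph = closure of the graph of G^0) *)
Definition Gmap (N : nat) (r : nat -> R) (El : nat -> nat -> Prop)
    (tau g : nat -> R) : Prop :=
  forall eps, 0 < eps -> exists tau' g', G0graph N r El tau' g' /\
    forall j, (j < N)%nat -> Rabs (tau j - tau' j) < eps /\ Rabs (g j - g' j) < eps.

Definition compact_htd (dom : R -> nat -> Prop) : Prop :=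
  exists (J : nat) (tt : nat -> R), tt O = 0 /\
    (forall j, (j <= J)%nat -> tt j <= tt (S j)) /\
    forall t k, dom t k <-> ((k <= J)%nat /\ tt k <= t <= tt (S k)).

Definition htd (dom : R -> nat -> Prop) : Prop :=
  forall T J, dom T J -> compact_htd (fun t k => dom t k /\ t <= T /\ (k <= J)%nat).

Definition interior_pt (dom : R -> nat -> Prop) (t : R) (j : nat) : Prop :=
  exists t1 t2, t1 < t < t2 /\ dom t1 j /\ dom t2 j.

Definition is_solution (N : nat) (T : R) (r : nat -> R) (xi : nat -> nat -> nat -> Prop)
    (x : R -> nat -> State) (dom : R -> nat -> Prop) : Prop :=
  htd dom /\ dom 0 O /\
  (inC N (x 0 O) \/ inD N (x 0 O)) /\
  (forall j s, dom s j -> forall i, (i < N)%nat ->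
     forall eps, 0 < eps -> exists delta, 0 < delta /\
       forall t, dom t j -> Rabs (t - s) < delta ->
         Rabs (fst (x t j) i - fst (x s j) i) < eps) /\
  (forall j t1 t2, dom t1 j -> dom t2 j -> snd (x t1 j) = snd (x t2 j)) /\
  (forall j t, interior_pt dom t j ->
     inC N (x t j) /\
     forall i, (i < N)%nat -> derivable_pt_lim (fun s => fst (x s j) i) t (/ T)) /\
  (* jumps: x^+ in G_{lambda+1}(tau) x {lambda+1}; E_{lambda+1} = xi lambda *)
  (forall t j, dom t j -> dom t (S j) ->
     inD N (x t j) /\
     Gmap N r (xi (snd (x t j))) (fst (x t j)) (fst (x t (S j))) /\
     snd (x t (S j)) = S (snd (x t j))).

Definition in_As (N : nat) (a : nat -> R) : Prop :=
  (exists mu, 0 <= mu <= 1 /\ forall i, (i < N)%nat -> a i = mu) \/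
  (forall i, (i < N)%nat -> a i = 0 \/ a i = 1).

Fixpoint sumN (n : nat) (f : nat -> R) : R :=
  match n with
  | O => 0
  | S m => sumN m f + f m
  end.

Definition distA (N : nat) (x : State) : R :=
  real (Glb_Rbar (fun d => exists (a : nat -> R) (l : nat), in_As N a /\
     d = sqrt (sumN N (fun i => (fst x i - a i) ^ 2) + (INR (snd x) - INR l) ^ 2))).

Definition class_Kinf (alpha : R -> R) : Prop :=
  alpha 0 = 0 /\
  (forall s, 0 <= s -> forall eps, 0 < eps -> exists delta, 0 < delta /\
     forall s', 0 <= s' -> Rabs (s' - s) < delta -> Rabs (alpha s' - alpha s) < eps) /\
  (forall s1 s2, 0 <= s1 -> s1 < s2 -> alpha s1 < alpha s2) /\
  (forall M, exists s, 0 <= s /\ M < alpha s).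

Definition UGS (N : nat) (T : R) (r : nat -> R) (xi : nat -> nat -> nat -> Prop) : Prop :=
  exists alpha, class_Kinf alpha /\
    forall x dom, is_solution N T r xi x dom ->
      forall t k, dom t k -> distA N (x t k) <= alpha (distA N (x 0 O)).

Definition GFTA (N : nat) (T : R) (r : nat -> R) (xi : nat -> nat -> nat -> Prop) : Prop :=
  exists Tbar : State -> R,
    forall x dom, is_solution N T r xi x dom ->
      0 < Tbar (x 0 O) /\
      forall t k, dom t k -> Tbar (x 0 O) <= t + INR k -> distA N (x t k) = 0.

Definition GFxTA (N : nat) (T : R) (r : nat -> R) (xi : nat -> nat -> nat -> Prop) : Prop :=
  exists Tbar : R, 0 < Tbar /\
    forall x dom, is_solution N T r xi x dom ->
      forall t k, dom t k -> Tbar <= t + INR k -> distA N (x t k) = 0.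

(* Main.v *)
From Stdlib Require Import Reals Lra Lia ZArith List Classical ClassicalEpsilon.
From Coquelicot Require Import Rbar Lub.
Require Import Defs.
Import ListNotations.

Definition Cq (E : nat -> nat -> Prop) (istar q c : nat) : Prop :=
  exists q', (q' <= q)%nat /\ is_path E istar c q'.

Lemma chain_app_l E l1 l2 : chain E (l1 ++ l2) -> chain E l1.
Proof.
  induction l1 as [|a l1 IH]; [simpl; auto|].
  destruct l1 as [|b l1']; [simpl; auto|].
  intros H. change (E a b /\ chain E ((b :: l1') ++ l2)) in H. destruct H as [H1 H2].
  change (E a b /\ chain E (b :: l1')). split; auto.
Qed.

Lemma chain_snoc E l d c : chain E l -> (l <> [] -> E (last l d) c) -> chain E (l ++ [c]).
Proof.
  induction l as [|a l IH]; simpl; auto.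
  destruct l as [|b l']; simpl; intros H1 H2.
  - split; auto. apply H2. discriminate.
  - destruct H1 as [H1 H3]. split; auto. apply IH; auto. intros _. apply H2. discriminate.
Qed.

Lemma chain_snoc_inv E l d c : chain E (l ++ [c]) -> l <> [] -> E (last l d) c.
Proof.
  induction l as [|a l IH]; simpl; [congruence|].
  destruct l as [|b l']; simpl; intros H _.
  - tauto.
  - destruct H as [_ H]. apply IH; auto. discriminate.
Qed.

Lemma hd_app {A} (l l' : list A) : l <> [] -> hd_error (l ++ l') = hd_error l.
Proof. destruct l; simpl; congruence. Qed.

Lemma path_prefix E a b n c : is_path E a b n -> (exists l, NoDup l /\ chain E l /\ hd_error l = Some a /\
    last l a = b /\ length l = S n /\ In c l) -> exists n', (n' <= n)%nat /\ is_path E a c n'.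
Proof.
  intros _ [l [Hnd [Hch [Hhd [Hl [Hlen Hin]]]]]].
  destruct (in_split c l Hin) as [l1 [l2 ->]].
  exists (length l1). split.
  { rewrite length_app in Hlen. simpl in Hlen. lia. }
  exists (l1 ++ [c]). replace (l1 ++ c :: l2) with ((l1 ++ [c]) ++ l2) in Hnd, Hch by (rewrite <- app_assoc; reflexivity). repeat split.
  - eapply NoDup_app_remove_r; eauto.
  - eapply chain_app_l; eauto.
  - rewrite <- Hhd. destruct l1; simpl; auto.
  - apply last_last.
  - rewrite length_app. simpl. lia.
Qed.

Lemma NoDup_snoc {A} (l : list A) c : NoDup l -> ~ In c l -> NoDup (l ++ [c]).
Proof.
  intros H1 H2. apply NoDup_app; auto. constructor; auto. constructor.
  intros a Ha [->|[]]. auto.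
Qed.

Lemma path0 E a b : is_path E a b 0 -> b = a.
Proof.
  intros [l [_ [_ [Hhd [Hl Hlen]]]]]. destruct l as [|y [|z l]]; simpl in *; try lia.
  inversion Hhd; subst. auto.
Qed.

Lemma in_Vq_Cq N E istar q i : in_Vq N E istar q i -> Cq E istar q i.
Proof. intros [_ [Hp _]]. exists q. split; auto. Qed.

Lemma Cq_istar E istar q : Cq E istar q istar.
Proof.
  exists O. split; [lia|]. exists [istar]. repeat split; simpl; auto. constructor; auto. constructor.
Qed.

Lemma Cq0 E istar c : Cq E istar 0 c -> c = istar.
Proof. intros [q' [Hq Hp]]. assert (q' = O) by lia. subst. eapply path0; eauto. Qed.

Lemma Cq_step N E istar q c : simple_digraph N E -> (c < N)%nat -> Cq E istar (S q) c -> ~ Cq E istar q c ->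
  exists p, (p < N)%nat /\ in_Vq N E istar q p /\ E p c.
Proof.
  intros Hs Hc [q' [Hq' Hp]] Hn.
  assert (q' = S q).
  { destruct (Nat.eq_dec q' (S q)); auto. exfalso. apply Hn. exists q'. split; auto. lia. }
  subst. destruct Hp as [l [Hnd [Hch [Hhd [Hl Hlen]]]]].
  assert (Hne : l <> []) by (intro; subst; simpl in Hlen; lia).
  destruct (exists_last Hne) as [l' [x Hx]]. subst l.
  rewrite last_last in Hl. subst x.
  assert (Hne' : l' <> []) by (intro; subst; simpl in Hlen; lia).
  set (p := last l' istar).
  assert (Ep : E p c) by (eapply chain_snoc_inv; eauto).
  destruct (Hs p c Ep) as [Hpn _].
  exists p. split; auto. split; [|auto]. split; auto. split.
  - exists l'. repeat split; auto.
    + eapply NoDup_app_remove_r; eauto.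
    + eapply chain_app_l; eauto.
    + rewrite <- Hhd. rewrite hd_app; auto.
    + rewrite length_app in Hlen. simpl in Hlen. lia.
  - intros q'' Hq''. apply Nat.nlt_ge. intro Hlt.
    apply Hn. destruct Hq'' as [l'' [Hnd'' [Hch'' [Hhd'' [Hl'' Hlen'']]]]].
    destruct (classic (In c l'')) as [Hin|Hin].
    + destruct (path_prefix E istar p q'' c) as [n' [Hn' Hpc]].
      * exists l''. repeat split; auto.
      * exists l''. repeat split; auto.
      * exists n'. split; auto. lia.
    + exists (S q''). split; [lia|]. exists (l'' ++ [c]). repeat split.
      * apply NoDup_snoc; auto.
      * apply chain_snoc with (d := istar); auto. intros _. rewrite Hl''. auto.
      * rewrite hd_app; auto. intro; subst; simpl in Hlen''; lia.
      * apply last_last.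
      * rewrite length_app. simpl. lia.
Qed.

Lemma min_exists (P : nat -> Prop) n : P n -> exists m, P m /\ forall m', P m' -> (m <= m')%nat.
Proof.
  revert P. induction n as [n IH] using (well_founded_induction Nat.lt_wf_0). intros P Hn.
  destruct (classic (exists m', P m' /\ (m' < n)%nat)) as [[m' [Hm' Hlt]]|Hno].
  - apply (IH m' Hlt P Hm').
  - exists n. split; auto. intros m' Hm'. apply Nat.nlt_ge. intro Hlt. apply Hno. eauto.
Qed.

Lemma Cq_all N E istar qs c : is_root N E istar -> is_qstar N E istar qs -> (c < N)%nat -> Cq E istar qs c.
Proof.
  intros [_ Hr] [_ Hq] Hc. destruct (Hr c Hc) as [q0 Hp].
  destruct (min_exists (fun q => is_path E istar c q) q0 Hp) as [m [Hm Hmin]].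
  exists m. split; auto. apply (Hq c m). split; auto. split; auto.
Qed.
Open Scope R_scope.

Definition Jrel (N : nat) (r : nat -> R) (El : nat -> nat -> Prop) (b a : nat -> R) : Prop :=
  exists i, (i < N)%nat /\ b i = 1 /\ a i = 0 /\
   forall j, (j < N)%nat -> j <> i ->
     (El i j -> (a j = 0 /\ b j <= r j) \/ (a j = 1 /\ r j <= b j)) /\
     (~ El i j -> a j = b j).

Lemma abs_lt_iff a D : Rabs a < D <-> -D < a < D.
Proof. unfold Rabs; destruct (Rcase_abs a); split; intros; lra. Qed.

Lemma eq_eps a b : (forall eps, 0 < eps -> Rabs (a - b) < eps) -> a = b.
Proof.
  intros H. destruct (Req_dec a b) as [|Hn]; auto. exfalso.
  assert (0 < Rabs (a - b)) by (apply Rabs_pos_lt; lra).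
  specialize (H _ H0). lra.
Qed.

Lemma le_eps a b : (forall eps, 0 < eps -> a < b + eps) -> a <= b.
Proof.
  intros H. apply Rnot_lt_le. intro Hl. specialize (H (a - b)). lra.
Qed.

Lemma ge_eps a b : (forall eps, 0 < eps -> a > b - eps) -> b <= a.
Proof.
  intros H. apply Rnot_lt_le. intro Hl. specialize (H (b - a)). lra.
Qed.

Definition monoR (A : R -> Prop) := forall e e', A e -> e <= e' -> A e'.

Lemma or_eps (A B : R -> Prop) : monoR A -> monoR B ->
  (forall eps, 0 < eps -> A eps \/ B eps) ->
  (forall eps, 0 < eps -> A eps) \/ (forall eps, 0 < eps -> B eps).
Proof.
  intros MA MB H. destruct (classic (forall eps, 0 < eps -> A eps)) as [|Hn]; auto.
  right. apply not_all_ex_not in Hn. destruct Hn as [e0 He0].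
  apply imply_to_and in He0. destruct He0 as [He0 Hna].
  intros eps He. destruct (H (Rmin eps e0)) as [HA|HB].
  - apply Rmin_pos; auto.
  - exfalso. apply Hna. eapply MA; [exact HA| apply Rmin_r].
  - eapply MB; [exact HB| apply Rmin_l].
Qed.

Lemma fin_choice (n : nat) (P : nat -> R -> Prop) :
  (forall i, monoR (P i)) ->
  (forall eps, 0 < eps -> exists i, (i < n)%nat /\ P i eps) ->
  exists i, (i < n)%nat /\ forall eps, 0 < eps -> P i eps.
Proof.
  intros M. induction n as [|m IH]; intros H.
  - destruct (H 1 Rlt_0_1) as [i [Hi _]]. lia.
  - destruct (classic (forall eps, 0 < eps -> P m eps)) as [Hm|Hn].
    + exists m. split; auto.
    + apply not_all_ex_not in Hn. destruct Hn as [e0 He0].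
      apply imply_to_and in He0. destruct He0 as [He0 Hna].
      destruct IH as [i [Hi Hp]].
      * intros eps He. destruct (H (Rmin eps e0)) as [i [Hi Hp]]. apply Rmin_pos; auto.
        destruct (Nat.eq_dec i m) as [->|Hne].
        -- exfalso. apply Hna. eapply M; [exact Hp|apply Rmin_r].
        -- exists i. split; [lia|]. eapply M; [exact Hp|apply Rmin_l].
      * exists i. split; [lia|auto].
Qed.

Lemma Gmap_Jrel N r El tau g : (forall j, (j < N)%nat -> 0 < r j < 1) ->
  Gmap N r El tau g -> Jrel N r El tau g.
Proof.
  intros Hr HG.
  set (P := fun i eps => exists tau' g' : nat -> R,
     (forall k, (k < N)%nat -> 0 <= tau' k <= 1) /\ tau' i = 1 /\ g' i = 0 /\
     (forall j, (j < N)%nat -> j <> i -> Defs.Rset El r i tau' j (g' j)) /\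
     (forall j, (j < N)%nat -> Rabs (tau j - tau' j) < eps /\ Rabs (g j - g' j) < eps)).
  assert (MP : forall i, monoR (P i)).
  { intros i e e' [t' [g' [H1 [H2 [H3 [H4 H5]]]]]] Hle. exists t', g'. do 4 (split; auto). intros j Hj. destruct (H5 j Hj). split; lra. }
  destruct (fin_choice N P MP) as [i [Hi HP]].
  { intros eps He. destruct (HG eps He) as [t' [g' [[H1 [i [Hi [H2 [H3 H4]]]]] H5]]].
    exists i. split; auto. exists t', g'. do 4 (split; auto). }
  exists i. split; [exact Hi|]. split; [|split].
  - apply eq_eps. intros eps He. destruct (HP eps He) as [t' [g' [_ [H2 [_ [_ H5]]]]]].
    rewrite <- H2. apply H5; auto.
  - apply eq_eps. intros eps He.
    destruct (HP eps He) as [t' [g' [_ [_ [H3 [_ H5]]]]]].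
    replace (g i - 0) with (g i - g' i) by (rewrite H3; ring). apply (H5 i Hi).
  - intros j Hj Hne. split.
    + intros Hel.
      destruct (or_eps (fun e => Rabs (g j) < e /\ tau j < r j + e)
                       (fun e => Rabs (g j - 1) < e /\ tau j > r j - e)) as [HA|HB].
      * intros e e' [h1 h2] h. split; lra.
      * intros e e' [h1 h2] h. split; lra.
      * intros eps He. destruct (HP eps He) as [t' [g' [H1 [_ [_ [H4 H5]]]]]].
        destruct (H5 j Hj) as [Ht Hg]. apply abs_lt_iff in Ht. 
        destruct (H4 j Hj Hne) as [Hs _]. specialize (Hs Hel).
        destruct Hs as [[Hl Hv]|[[Hl Hv]|[Hl Hv]]].
        -- left. rewrite Hv, Rminus_0_r in Hg. split; auto. lra.
        -- destruct Hv as [Hv|Hv]; [left|right]; rewrite Hv in Hg; [rewrite Rminus_0_r in Hg|]; split; auto; lra.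
        -- right. rewrite Hv in Hg. split; auto. lra.
      * left. split.
        -- apply eq_eps. intros. rewrite Rminus_0_r. apply HA; auto.
        -- apply le_eps. intros. apply HA; auto.
      * right. split.
        -- apply eq_eps. intros. apply HB; auto.
        -- apply ge_eps. intros. apply HB; auto.
    + intros Hel. apply eq_eps. intros eps He.
      destruct (HP (eps/2)) as [t' [g' [H1 [_ [_ [H4 H5]]]]]]. lra.
      destruct (H5 j Hj) as [Ht Hg]. destruct (H4 j Hj Hne) as [_ Hs]. specialize (Hs Hel).
      rewrite Hs in Hg. apply abs_lt_iff in Ht, Hg. apply abs_lt_iff. lra.
Qed.

Definition dset (N:nat) (x:State) : R -> Prop := fun d => exists (a : nat -> R) (l : nat), in_As N a /\
     d = sqrt (sumN N (fun i => (fst x i - a i) ^ 2) + (INR (snd x) - INR l) ^ 2).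

Lemma distA_eq N x : distA N x = real (Glb_Rbar (dset N x)).
Proof. reflexivity. Qed.

Lemma dset_ne N x : dset N x (sqrt (sumN N (fun i => (fst x i - 0) ^ 2) + (INR (snd x) - INR (snd x)) ^ 2)).
Proof. exists (fun _ => 0), (snd x). split; auto. left. exists 0. split; [lra|auto]. Qed.

Lemma glb_fin N x : Glb_Rbar (dset N x) = Finite (distA N x).
Proof.
  rewrite distA_eq. destruct (Glb_Rbar_correct (dset N x)) as [lb gr].
  pose proof (lb _ (dset_ne N x)) as H1.
  assert (H2 : Rbar_le 0 (Glb_Rbar (dset N x))).
  { apply gr. intros d [a [l [_ ->]]]. simpl. apply sqrt_pos. }
  destruct (Glb_Rbar (dset N x)); simpl in *; tauto.
Qed.

Lemma distA_le_elem N x d : dset N x d -> distA N x <= d.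
Proof.
  intros Hd. destruct (Glb_Rbar_correct (dset N x)) as [lb gr].
  pose proof (lb _ Hd) as H. rewrite glb_fin in H. exact H.
Qed.

Lemma distA_nonneg N x : 0 <= distA N x.
Proof.
  destruct (Glb_Rbar_correct (dset N x)) as [lb gr].
  assert (H2 : Rbar_le 0 (Glb_Rbar (dset N x))).
  { apply gr. intros d [a [l [_ ->]]]. simpl. apply sqrt_pos. }
  rewrite glb_fin in H2. exact H2.
Qed.

Lemma distA_approx N x eps : 0 < eps -> exists d, dset N x d /\ d < distA N x + eps.
Proof.
  intros He. destruct (classic (exists d, dset N x d /\ d < distA N x + eps)) as [H|H]; auto.
  exfalso. destruct (Glb_Rbar_correct (dset N x)) as [lb gr].
  assert (H2 : Rbar_le (distA N x + eps) (Glb_Rbar (dset N x))).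
  { apply gr. intros d Hd. simpl. apply Rnot_lt_le. intro Hl. apply H. eauto. }
  rewrite glb_fin in H2. simpl in H2. lra.
Qed.

Lemma sumN_nonneg n f : (forall i, (i < n)%nat -> 0 <= f i) -> 0 <= sumN n f.
Proof.
  induction n; simpl; intros H; [lra|].
  pose proof (H n (Nat.lt_succ_diag_r n)). assert (0 <= sumN n f) by (apply IHn; intros; apply H; lia). lra.
Qed.

Lemma sumN_term n f i : (forall j, (j < n)%nat -> 0 <= f j) -> (i < n)%nat -> f i <= sumN n f.
Proof.
  induction n; simpl; intros H Hi; [lia|].
  destruct (Nat.eq_dec i n) as [->|Hne].
  - assert (0 <= sumN n f) by (apply sumN_nonneg; intros; apply H; lia). lra.
  - assert (f i <= sumN n f) by (apply IHn; [intros; apply H; lia| lia]).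
    pose proof (H n (Nat.lt_succ_diag_r n)). lra.
Qed.

Lemma sumN_le n f M : (forall i, (i < n)%nat -> f i <= M) -> sumN n f <= INR n * M.
Proof.
  induction n; cbn [sumN]; intros H; [simpl; lra|].
  assert (sumN n f <= INR n * M) by (apply IHn; intros; apply H; lia).
  pose proof (H n (Nat.lt_succ_diag_r n)). rewrite S_INR. lra.
Qed.

Lemma distA_bound N x a M : in_As N a -> 0 <= M ->
  (forall i, (i < N)%nat -> Rabs (fst x i - a i) <= M) -> distA N x <= INR N * M.
Proof.
  intros Ha HM H.
  eapply Rle_trans. apply distA_le_elem. exists a, (snd x). split; [exact Ha|reflexivity].
  replace ((INR (snd x) - INR (snd x)) ^ 2) with 0 by ring. rewrite Rplus_0_r.
  assert (Hs : sumN N (fun i => (fst x i - a i) ^ 2) <= INR N * (M*M)).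
  { apply sumN_le. intros i Hi. specialize (H i Hi).
    replace ((fst x i - a i) ^ 2) with (Rsqr (Rabs (fst x i - a i))) by (rewrite <- Rsqr_abs; unfold Rsqr; ring).
    unfold Rsqr. pose proof (Rabs_pos (fst x i - a i)). nra. }
  assert (HN : INR N <= INR N * INR N).
  { destruct N as [|n]; [simpl; lra|]. pose proof (pos_INR n). rewrite S_INR. nra. }
  pose proof (pos_INR N).
  rewrite <- (sqrt_square (INR N * M)) by nra.
  apply sqrt_le_1_alt. assert (0 <= M*M) by nra. nra.
Qed.

Lemma distA_zero N x : in_As N (fst x) -> distA N x = 0.
Proof.
  intros H. apply Rle_antisym; [|apply distA_nonneg].
  replace 0 with (INR N * 0) by ring. apply (distA_bound N x (fst x)); auto; [lra|].
  intros. rewrite Rminus_diag, Rabs_R0. lra.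
Qed.

Lemma distA_lower N x eps : 0 < eps -> exists a, in_As N a /\
  forall i, (i < N)%nat -> Rabs (fst x i - a i) < distA N x + eps.
Proof.
  intros He. destruct (distA_approx N x eps He) as [d [[a [l [Ha ->]]] Hd]].
  exists a. split; auto. intros i Hi. eapply Rle_lt_trans; [|exact Hd].
  rewrite <- sqrt_Rsqr_abs. apply sqrt_le_1_alt.
  assert (((fst x i - a i) ^ 2) <= sumN N (fun i => (fst x i - a i) ^ 2)).
  { apply (sumN_term N (fun i => (fst x i - a i) ^ 2)); auto. intros; apply pow2_ge_0. }
  pose proof (pow2_ge_0 (INR (snd x) - INR l)). unfold Rsqr. simpl in *. lra.
Qed.
Definition Qinv (N : nat) (tau : nat -> R) (D : R) : Prop :=
  exists mu, forall i, (i < N)%nat -> exists z : Z, Rabs (tau i + IZR z - mu) <= D.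


Lemma Q_shift N tau D c : Qinv N tau D -> Qinv N (fun i => tau i + c) D.
Proof.
  intros [mu H]. exists (mu + c). intros i Hi. destruct (H i Hi) as [z Hz]. exists z.
  replace (tau i + c + IZR z - (mu + c)) with (tau i + IZR z - mu) by ring. exact Hz.
Qed.

Lemma Q_jump N r El b a D : Jrel N r El b a -> Qinv N b D -> Qinv N a D.
Proof.
  intros [i [Hi [Hb [Ha Hj]]]] [mu H]. exists mu.
  destruct (H i Hi) as [zi Hzi]. rewrite Hb in Hzi.
  intros j Hjn. destruct (Nat.eq_dec j i) as [->|Hne].
  - exists (zi + 1)%Z. rewrite Ha, plus_IZR.
    replace (0 + (IZR zi + 1) - mu) with (1 + IZR zi - mu) by ring. exact Hzi.
  - destruct (Hj j Hjn Hne) as [H1 H2]. destruct (classic (El i j)) as [He|He].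
    + destruct (H1 He) as [[-> _]|[-> _]].
      * exists (zi + 1)%Z. rewrite plus_IZR.
        replace (0 + (IZR zi + 1) - mu) with (1 + IZR zi - mu) by ring. exact Hzi.
      * exists zi. exact Hzi.
    + rewrite (H2 He). apply H; auto.
Qed.


Lemma Q_init N x eps : 0 < eps -> Qinv N (fst x) (distA N x + eps).
Proof.
  intros He. destruct (distA_lower N x eps He) as [a [[[mu [Hmu Ha]]|Ha] Hd]].
  - exists mu. intros i Hi. exists 0%Z. rewrite Rplus_0_r, <- (Ha i Hi). left. apply Hd; auto.
  - exists 0. intros i Hi. destruct (Ha i Hi) as [H0|H1].
    + exists 0%Z. rewrite Rplus_0_r. left. rewrite <- H0. apply Hd; auto.
    + exists (-1)%Z. replace (fst x i + IZR (-1) - 0) with (fst x i - a i) by (rewrite H1; simpl; ring).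
      left. apply Hd; auto.
Qed.

Lemma abs_le_iff a D : Rabs a <= D <-> -D <= a <= D.
Proof. unfold Rabs; destruct (Rcase_abs a); split; intros; lra. Qed.


Lemma Q_dist N x D : (forall i, (i < N)%nat -> 0 <= fst x i <= 1) -> 0 <= D ->
  Qinv N (fst x) D -> distA N x <= INR N * (4 * D).
Proof.
  intros Hc HD [mu HQ].
  destruct (classic (exists i0, (i0 < N)%nat /\ 4 * D < fst x i0 < 1 - 4 * D)) as [[i0 [Hi0 Hr]]|Hn].
  - apply (distA_bound N x (fun _ => fst x i0)); [|lra|].
    + left. exists (fst x i0). split; [apply Hc; auto|auto].
    + intros j Hj. destruct (HQ j Hj) as [zj Hzj]. destruct (HQ i0 Hi0) as [zi Hzi].
      pose proof (Hc j Hj). apply abs_le_iff in Hzj, Hzi. apply abs_le_iff.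
      destruct (Z_lt_le_dec 0 (zj - zi)) as [Hw|Hw].
      * assert (IZR 1 <= IZR (zj - zi)) by (apply IZR_le; lia). rewrite minus_IZR in H0. lra.
      * destruct (Z_lt_le_dec (zj - zi) 0) as [Hw'|Hw'].
        -- assert (IZR (zj - zi) <= IZR (-1)) by (apply IZR_le; lia). rewrite minus_IZR in H0. lra.
        -- assert (zj = zi) by lia. subst. lra.
  - apply (distA_bound N x (fun i => if Rle_dec (fst x i) (1/2) then 0 else 1)); [|lra|].
    + right. intros i Hi. destruct (Rle_dec (fst x i) (1/2)); auto.
    + intros i Hi. pose proof (Hc i Hi). apply abs_le_iff.
      assert (fst x i <= 4 * D \/ 1 - 4 * D <= fst x i).
      { destruct (Rle_dec (fst x i) (4 * D)); auto. destruct (Rle_dec (1 - 4 * D) (fst x i)); auto.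
        exfalso. apply Hn. exists i. split; auto. lra. }
      destruct (Rle_dec (fst x i) (1/2)); lra.
Qed.

Lemma endpoint_const (h : R -> R) (D : R -> Prop) a b c p : a < b ->
  (forall u, a < u < b -> D u) ->
  (forall u, a < u < b -> h u = c) ->
  (forall eps, 0 < eps -> exists delta, 0 < delta /\ forall u, D u -> Rabs (u - p) < delta -> Rabs (h u - h p) < eps) ->
  (p = a \/ p = b) -> h p = c.
Proof.
  intros Hab HD Hc Hcont Hp. symmetry. apply eq_eps. intros eps He.
  destruct (Hcont eps He) as [d [Hd Hu]].
  set (m := Rmin d (b - a) / 2).
  assert (0 < m) by (unfold m; apply Rdiv_lt_0_compat; [apply Rmin_pos; lra|lra]).
  assert (m < d) by (unfold m; pose proof (Rmin_l d (b-a)); lra).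
  assert (m < b - a) by (unfold m; pose proof (Rmin_r d (b-a)); lra).
  destruct Hp as [->| ->].
  - assert (Hi : a < a + m < b) by lra.
    specialize (Hu (a + m) (HD _ Hi)). rewrite (Hc _ Hi) in Hu.
    apply Hu. replace (a + m - a) with m by ring. rewrite Rabs_pos_eq; lra.
  - assert (Hi : a < b - m < b) by lra.
    specialize (Hu (b - m) (HD _ Hi)). rewrite (Hc _ Hi) in Hu.
    apply Hu. replace (b - m - b) with (- m) by ring. rewrite Rabs_Ropp, Rabs_pos_eq; lra.
Qed.

Lemma flow_affine (f : R -> R) (D : R -> Prop) a b T : 0 < T -> a <= b ->
  (forall s, a <= s <= b -> D s) ->
  (forall s, D s -> forall eps, 0 < eps -> exists delta, 0 < delta /\
       forall u, D u -> Rabs (u - s) < delta -> Rabs (f u - f s) < eps) ->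
  (forall u, a < u < b -> derivable_pt_lim f u (/ T)) ->
  forall s, a <= s <= b -> f s = f a + (s - a) / T.
Proof.
  intros HT Hab HD Hc Hd s Hs.
  destruct (Req_dec a b) as [<-|Hne].
  { assert (s = a) by lra. subst. field. lra. }
  assert (Hlt : a < b) by lra.
  set (h := fun u => f u - u / T).
  assert (Hmvt : forall u v, a < u -> u < v -> v < b -> h v = h u).
  { intros u v H1 H2 H3. destruct (MVT_cor2 f (fun _ => / T) u v H2) as [c [Hc1 _]].
    - intros c Hc0. apply Hd. lra.
    - unfold h. assert (f v = f u + / T * (v - u)) by lra. rewrite H. field. lra. }
  set (m := (a + b) / 2).
  assert (Hin : forall u, a < u < b -> h u = h m).
  { intros u Hu. destruct (Rlt_le_dec u m) as [H1|H1].
    - symmetry. apply Hmvt; unfold m in *; lra.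
    - destruct (Req_dec u m) as [->|H2]; auto. apply Hmvt; unfold m in *; lra. }
  assert (Hhc : forall p, D p -> forall eps, 0 < eps -> exists delta, 0 < delta /\
       forall u, D u -> Rabs (u - p) < delta -> Rabs (h u - h p) < eps).
  { intros p Dp eps He. destruct (Hc p Dp (eps/2)) as [d [Hd0 Hu]]. lra.
    exists (Rmin d (eps * T / 2)). split.
    { apply Rmin_pos; auto. apply Rdiv_lt_0_compat; [nra|lra]. }
    intros u Du Hup. pose proof (Rmin_l d (eps * T / 2)). pose proof (Rmin_r d (eps * T / 2)).
    specialize (Hu u Du ltac:(lra)). unfold h.
    replace (f u - u / T - (f p - p / T)) with ((f u - f p) - (u - p) / T) by (field; lra).
    eapply Rle_lt_trans. apply Rabs_triang.
    rewrite Rabs_Ropp. unfold Rdiv. rewrite Rabs_mult, (Rabs_pos_eq (/T)) by (left; apply Rinv_0_lt_compat; lra).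
    assert (Rabs (u - p) * / T < eps / 2).
    { apply Rmult_lt_reg_r with T; auto. rewrite Rmult_assoc, Rinv_l by lra. lra. }
    lra. }
  assert (Ha : h a = h m).
  { apply (endpoint_const h D a b); auto. intros; apply HD; lra. apply Hhc. apply HD; lra. }
  assert (Hb : h b = h m).
  { apply (endpoint_const h D a b); auto. intros; apply HD; lra. apply Hhc. apply HD; lra. }
  assert (h s = h a).
  { rewrite Ha. destruct (Req_dec s a) as [->|]; auto. destruct (Req_dec s b) as [->|]; auto.
    apply Hin. lra. }
  unfold h in H. assert (f s = f a + s / T - a / T) by lra. rewrite H0. field. lra.
Qed.

Lemma up_bound (fa a s T : R) : 0 < T -> a < s ->
  (forall u, a < u < s -> fa + (u - a) / T <= 1) -> fa + (s - a) / T <= 1.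
Proof.
  intros HT Has H. apply Rnot_lt_le. intro Hc.
  set (e := fa + (s - a) / T - 1).
  set (d := Rmin ((s - a) / 2) (e * T / 2)).
  assert (0 < e) by (unfold e; lra).
  assert (0 < d) by (unfold d; apply Rmin_pos; [lra| apply Rdiv_lt_0_compat; [nra|lra]]).
  assert (d <= (s - a) / 2) by apply Rmin_l.
  assert (d <= e * T / 2) by apply Rmin_r.
  specialize (H (s - d) ltac:(lra)).
  assert ((s - d - a) / T >= (s - a) / T - e / 2).
  { replace ((s - d - a) / T) with ((s - a) / T - d / T) by (field; lra).
    assert (d / T <= e / 2). { apply Rmult_le_reg_r with T; auto. unfold Rdiv. rewrite Rmult_assoc, Rinv_l by lra. lra. }
    lra. }
  unfold e in *. lra.
Qed.

Lemma Jrel_range N r El b a : Jrel N r El b a -> (forall i, (i < N)%nat -> 0 <= b i <= 1) ->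
  forall j, (j < N)%nat -> 0 <= a j <= 1.
Proof.
  intros [i [Hi [Hb [Ha Hj]]]] Hr j Hjn. destruct (Nat.eq_dec j i) as [->|Hne]; [rewrite Ha; lra|].
  destruct (Hj j Hjn Hne) as [H1 H2]. destruct (classic (El i j)) as [He|He].
  - destruct (H1 He) as [[-> _]|[-> _]]; lra.
  - rewrite (H2 He). auto.
Qed.

Lemma discretize N T r xi x dom t K :
  0 < T -> (forall i, (i < N)%nat -> 0 < r i < 1) -> is_solution N T r xi x dom -> dom t K ->
  exists sg : nat -> R, sg O = 0 /\ sg (S K) = t /\
   (forall k, (k <= K)%nat -> sg k <= sg (S k)) /\
   (forall k, (k <= K)%nat -> forall i, (i < N)%nat ->
      0 <= fst (x (sg k) k) i <= 1 /\ 0 <= fst (x (sg (S k)) k) i <= 1 /\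
      fst (x (sg (S k)) k) i = fst (x (sg k) k) i + (sg (S k) - sg k) / T) /\
   (forall k, (k < K)%nat ->
      (exists i, (i < N)%nat /\ fst (x (sg (S k)) k) i = 1) /\
      Jrel N r (xi (snd (x 0%R O) + k)%nat) (fst (x (sg (S k)) k)) (fst (x (sg (S k)) (S k)))).
Proof.
  intros HT Hr Hsol Hd.
  destruct Hsol as [Hhtd [H00 [Hinit [Hcont [Hlam [Hflow Hjump]]]]]].
  destruct (Hhtd t K Hd) as [J [tt [Htt0 [Hmono Hiff]]]].
  assert (HK : (K <= J)%nat /\ tt K <= t <= tt (S K)).
  { apply Hiff. split; auto. split; [lra|lia]. }
  assert (Hdom : forall k s, (k <= K)%nat -> tt k <= s <= tt (S k) -> dom s k /\ s <= t).
  { intros k s Hk Hs. assert (dom s k /\ s <= t /\ (k <= K)%nat) by (apply Hiff; split; [lia|auto]). tauto. }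
  assert (Hm : forall k, (k <= K)%nat -> tt k <= tt (S k)) by (intros; apply Hmono; lia).
  assert (HtK : tt (S K) = t).
  { destruct (Hdom K (tt (S K)) (le_n K)) as [_ H]. pose proof (Hm K (le_n K)). lra. lra. }
  assert (Haff : forall k, (k <= K)%nat -> forall i, (i < N)%nat -> forall s, tt k <= s <= tt (S k) ->
            fst (x s k) i = fst (x (tt k) k) i + (s - tt k) / T).
  { intros k Hk i Hi s Hs.
    apply (flow_affine (fun s => fst (x s k) i) (fun s => dom s k) (tt k) (tt (S k)) T).
    - exact HT.
    - apply Hm; auto.
    - intros s' Hs'. apply (Hdom k s' Hk Hs').
    - intros s' Ds'. apply Hcont; auto.
    - intros u Hu. apply Hflow; auto. exists (tt k), (tt (S k)). split; [lra|].
      split; apply Hdom; auto; pose proof (Hm k Hk); lra.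
    - exact Hs. }
  assert (Hlt1 : forall k, (k <= K)%nat -> forall i, (i < N)%nat -> fst (x (tt k) k) i <= 1 ->
            fst (x (tt (S k)) k) i <= 1).
  { intros k Hk i Hi H1. pose proof (Hm k Hk).
    destruct (Req_dec (tt k) (tt (S k))) as [He|Hne].
    - rewrite <- He. auto.
    - rewrite (Haff k Hk i Hi) by lra. apply up_bound; auto; [lra|].
      intros u Hu. rewrite <- (Haff k Hk i Hi u) by lra.
      assert (Hint : interior_pt dom u k).
      { exists (tt k), (tt (S k)). split; [lra|]. split; apply Hdom; auto; lra. }
      destruct (Hflow k u Hint) as [HC _]. apply HC; auto. }
  assert (Hlam' : forall k, (k <= K)%nat -> snd (x (tt k) k) = (snd (x 0%R O) + k)%nat).
  { induction k as [|k IH]; intros Hk.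
    - rewrite Htt0. lia.
    - assert (D1 : dom (tt (S k)) k) by (apply Hdom; [lia| pose proof (Hm k ltac:(lia)); lra]).
      assert (D2 : dom (tt (S k)) (S k)) by (apply Hdom; [lia| pose proof (Hm (S k) ltac:(lia)); lra]).
      destruct (Hjump _ _ D1 D2) as [_ [_ Hs]]. rewrite Hs.
      rewrite (Hlam k (tt (S k)) (tt k) D1) by (apply Hdom; [lia| pose proof (Hm k ltac:(lia)); lra]).
      rewrite IH by lia. lia. }
  assert (Hjmp : forall k, (k < K)%nat ->
      (exists i, (i < N)%nat /\ fst (x (tt (S k)) k) i = 1) /\
      (forall i, (i < N)%nat -> 0 <= fst (x (tt (S k)) k) i <= 1) /\
      Jrel N r (xi (snd (x 0%R O) + k)%nat) (fst (x (tt (S k)) k)) (fst (x (tt (S k)) (S k)))).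
  { intros k Hk.
    assert (D1 : dom (tt (S k)) k) by (apply Hdom; [lia| pose proof (Hm k ltac:(lia)); lra]).
    assert (D2 : dom (tt (S k)) (S k)) by (apply Hdom; [lia| pose proof (Hm (S k) ltac:(lia)); lra]).
    destruct (Hjump _ _ D1 D2) as [[HC HDi] [HG _]].
    rewrite (Hlam k (tt (S k)) (tt k) D1) in HG by (apply Hdom; [lia| pose proof (Hm k ltac:(lia)); lra]).
    rewrite Hlam' in HG by lia.
    split; [exact HDi|]. split; [exact HC|]. apply Gmap_Jrel; auto. }
  assert (HC : forall k, (k <= K)%nat -> forall i, (i < N)%nat -> 0 <= fst (x (tt k) k) i <= 1).
  { induction k as [|k IH]; intros Hk i Hi.
    - rewrite Htt0. destruct Hinit as [Hc|[Hc _]]; apply Hc; auto.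
    - destruct (Hjmp k ltac:(lia)) as [_ [Hb HJ]]. eapply Jrel_range; eauto. }
  exists tt. split; [auto|]. split; [auto|]. split; [auto|]. split.
  - intros k Hk i Hi. pose proof (HC k Hk i Hi). pose proof (Hm k Hk).
    rewrite (Haff k Hk i Hi (tt (S k))) by lra.
    split; auto. split; [|auto]. split.
    + assert (0 <= (tt (S k) - tt k) / T) by (unfold Rdiv; apply Rmult_le_pos; [lra| left; apply Rinv_0_lt_compat; lra]). lra.
    + rewrite <- (Haff k Hk i Hi (tt (S k))) by lra. apply Hlt1; auto. lra.
  - intros k Hk. destruct (Hjmp k Hk) as [H1 [_ H3]]. auto.
Qed.

Lemma Q_shift' N a b D c : (forall i, (i < N)%nat -> b i = a i + c) -> Qinv N a D -> Qinv N b D.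
Proof.
  intros H [mu HQ]. exists (mu + c). intros i Hi. destruct (HQ i Hi) as [z Hz]. exists z.
  rewrite H by auto. replace (a i + c + IZR z - (mu + c)) with (a i + IZR z - mu) by ring. exact Hz.
Qed.

Lemma class_Kinf_lin c : 0 < c -> class_Kinf (fun s => c * s).
Proof.
  intros Hc. split; [ring|]. split; [|split].
  - intros s Hs eps He. exists (eps / c). split. apply Rdiv_lt_0_compat; auto.
    intros s' Hs' Hd. replace (c * s' - c * s) with (c * (s' - s)) by ring.
    rewrite Rabs_mult, Rabs_pos_eq by lra.
    apply Rmult_lt_reg_r with (/ c). apply Rinv_0_lt_compat; auto.
    replace (c * Rabs (s' - s) * / c) with (Rabs (s' - s)) by (field; lra). exact Hd.
  - intros s1 s2 H1 H2. nra.
  - intros M. exists ((Rabs M + 1) / c). split.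
    + unfold Rdiv. apply Rmult_le_pos; [pose proof (Rabs_pos M); lra| left; apply Rinv_0_lt_compat; auto].
    + replace (c * ((Rabs M + 1) / c)) with (Rabs M + 1) by (field; lra). pose proof (Rle_abs M). lra.
Qed.

Lemma UGS_holds N T r xi : 0 < T -> (forall i, (i < N)%nat -> 0 < r i < 1) -> UGS N T r xi.
Proof.
  intros HT Hr. exists (fun s => (4 * INR N + 1) * s). split.
  { apply class_Kinf_lin. pose proof (pos_INR N). lra. }
  intros x dom Hsol t K Hd.
  set (d := distA N (x 0 O)).
  assert (Hd0 : 0 <= d) by apply distA_nonneg.
  destruct (discretize N T r xi x dom t K HT Hr Hsol Hd) as [sg [Hs0 [HsK [Hm [Hfl Hj]]]]].
  assert (Hmain : forall eps, 0 < eps -> distA N (x t K) <= INR N * (4 * (d + eps))).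
  { intros eps He.
    assert (HQ : forall k, (k <= K)%nat -> Qinv N (fst (x (sg k) k)) (d + eps)).
    { induction k as [|k IH]; intros Hk.
      - rewrite Hs0. apply Q_init; auto.
      - destruct (Hj k ltac:(lia)) as [_ HJ]. eapply Q_jump; [exact HJ|].
        eapply Q_shift'; [| apply IH; lia]. intros i Hi. apply (Hfl k ltac:(lia) i Hi). }
    rewrite <- HsK. apply Q_dist.
    - intros i Hi. apply (Hfl K (le_n K) i Hi).
    - lra.
    - eapply Q_shift'; [| apply (HQ K (le_n K))]. intros i Hi. apply (Hfl K (le_n K) i Hi). }
  assert (HN : 0 <= INR N) by apply pos_INR.
  assert (distA N (x t K) <= INR N * (4 * d)).
  { apply le_eps. intros e He.
    assert (Hp : 0 < e / (4 * INR N + 1)) by (apply Rdiv_lt_0_compat; lra).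
    specialize (Hmain _ Hp).
    assert (INR N * (4 * (e / (4 * INR N + 1))) < e).
    { replace (INR N * (4 * (e / (4 * INR N + 1)))) with (e * (4 * INR N / (4 * INR N + 1))) by (field; lra).
      assert (4 * INR N / (4 * INR N + 1) < 1).
      { apply Rmult_lt_reg_r with (4 * INR N + 1). lra. unfold Rdiv. rewrite Rmult_assoc, Rinv_l by lra. lra. }
      nra. }
    lra. }
  fold d. nra.
Qed.

Definition ph (x : R) : R := if Req_dec_T x 1 then 0 else x.

Lemma ph_1 : ph 1 = 0.
Proof. unfold ph. destruct (Req_dec_T 1 1); [auto|congruence]. Qed.
Lemma ph_0 : ph 0 = 0.
Proof. unfold ph. destruct (Req_dec_T 0 1); [auto|auto]. Qed.
Lemma ph_ne1 x : x <> 1 -> ph x = x.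
Proof. unfold ph. destruct (Req_dec_T x 1); [congruence|auto]. Qed.
Lemma ph_zero x : ph x = 0 -> x = 0 \/ x = 1.
Proof. unfold ph. destruct (Req_dec_T x 1); auto. Qed.

Definition DiscSys N T r (A B : nat -> nat -> R) (sg : nat -> R) (El : nat -> nat -> nat -> Prop) K :=
  (forall k, (k <= K)%nat -> sg k <= sg (S k)) /\
  (forall k, (k <= K)%nat -> forall i, (i < N)%nat ->
     0 <= A k i <= 1 /\ 0 <= B k i <= 1 /\ B k i = A k i + (sg (S k) - sg k) / T) /\
  (forall k, (k < K)%nat -> Jrel N r (El k) (B k) (A (S k))).

Lemma flow_ph N T r A B sg El K k i j : 0 < T -> DiscSys N T r A B sg El K -> (k <= K)%nat ->
  (i < N)%nat -> (j < N)%nat -> ph (A k i) = ph (A k j) -> ph (B k i) = ph (B k j).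
Proof.
  intros HT [Hm [Hf _]] Hk Hi Hj Hp.
  destruct (Hf k Hk i Hi) as [Ai [Bi Ei]]. destruct (Hf k Hk j Hj) as [Aj [Bj Ej]].
  pose proof (Hm k Hk).
  destruct (Req_dec (sg (S k)) (sg k)) as [He|Hne].
  - rewrite Ei, Ej, He. replace ((sg k - sg k) / T) with 0 by (field; lra). rewrite !Rplus_0_r. auto.
  - assert (0 < (sg (S k) - sg k) / T) by (apply Rdiv_lt_0_compat; lra).
    rewrite !ph_ne1 in Hp by lra. rewrite Ei, Ej, Hp. auto.
Qed.

(* the firing agent is unique *)
Lemma Jrel_fire N r El b a p : (forall j, (j < N)%nat -> 0 < r j < 1) ->
  Jrel N r El b a -> (p < N)%nat -> b p = 1 -> a p = 0 ->
  forall j, (j < N)%nat -> j <> p ->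
     (El p j -> (a j = 0 /\ b j <= r j) \/ (a j = 1 /\ r j <= b j)) /\ (~ El p j -> a j = b j).
Proof.
  intros Hr [i [Hi [Hb [Ha Hj]]]] Hp Hbp Hap.
  destruct (Nat.eq_dec p i) as [->|Hne]; [exact Hj|].
  exfalso. destruct (Hj p Hp Hne) as [H1 H2]. pose proof (Hr p Hp).
  destruct (classic (El i p)) as [He|He].
  - destruct (H1 He) as [[H3 H4]|[H3 H4]]; lra.
  - rewrite (H2 He) in Hap. lra.
Qed.

Lemma Jrel_mono N r El b a j : Jrel N r El b a -> (j < N)%nat -> 0 <= b j -> a j <= b j \/ r j <= b j.
Proof.
  intros [i [Hi [Hb [Ha Hj]]]] Hjn Hb0. destruct (Nat.eq_dec j i) as [->|Hne].
  - left. rewrite Ha, Hb. lra.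
  - destruct (Hj j Hjn Hne) as [H1 H2]. destruct (classic (El i j)) as [He|He].
    + destruct (H1 He) as [[-> H]|[_ H]]; [left; auto|right; auto].
    + left. rewrite (H2 He). lra.
Qed.

Definition syncS N (S : nat -> Prop) (istar : nat) (tau : nat -> R) : Prop :=
  forall c, (c < N)%nat -> S c -> ph (tau c) = ph (tau istar).

Lemma jump_sync N r El b a (S : nat -> Prop) istar :
  (istar < N)%nat -> S istar -> (forall i j, El i j -> S i) ->
  (forall i, (i < N)%nat -> 0 <= b i <= 1) ->
  Jrel N r El b a -> syncS N S istar b -> syncS N S istar a.
Proof.
  intros Hin Hsi Hsrc Hb0 [i0 [Hi0 [Hb [Ha Hj]]]] Hs.
  destruct (classic (S i0)) as [Si|Si].
  -
    assert (Hz : forall c, (c < N)%nat -> S c -> ph (a c) = 0).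
    { intros c Hc Sc. assert (ph (b c) = 0) by (rewrite (Hs c Hc Sc), <- (Hs i0 Hi0 Si), Hb; apply ph_1).
      destruct (Nat.eq_dec c i0) as [->|Hne]; [rewrite Ha; apply ph_0|].
      destruct (Hj c Hc Hne) as [H1 H2]. destruct (classic (El i0 c)) as [He|He].
      - destruct (H1 He) as [[-> _]|[-> _]]; [apply ph_0|apply ph_1].
      - rewrite (H2 He). auto. }
    intros c Hc Sc. rewrite (Hz c Hc Sc), (Hz istar Hin Hsi). auto.
  - assert (Hu : forall c, (c < N)%nat -> S c -> a c = b c).
    { intros c Hc Sc. assert (Hne : c <> i0) by (intro; subst; auto).
      destruct (Hj c Hc Hne) as [_ H2]. apply H2. intro He. apply Si. eapply Hsrc; eauto. }
    intros c Hc Sc. rewrite (Hu c Hc Sc), (Hu istar Hin Hsi). auto.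
Qed.

Lemma jump_all N r El b a i0 :
  (i0 < N)%nat -> Jrel N r El b a -> syncS N (fun _ => True) i0 b -> syncS N (fun _ => True) i0 a.
Proof.
  intros Hi0 [i [Hi [Hb [Ha Hj]]]] Hs.
  assert (Hz : forall c, (c < N)%nat -> ph (a c) = 0).
  { intros c Hc. assert (ph (b c) = 0) by (rewrite (Hs c Hc I), <- (Hs i Hi I), Hb; apply ph_1).
    destruct (Nat.eq_dec c i) as [->|Hne]; [rewrite Ha; apply ph_0|].
    destruct (Hj c Hc Hne) as [H1 H2]. destruct (classic (El i c)) as [He|He].
    - destruct (H1 He) as [[-> _]|[-> _]]; [apply ph_0|apply ph_1].
    - rewrite (H2 He). auto. }
  intros c Hc _. rewrite (Hz c Hc), (Hz i0 Hi0). auto.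
Qed.

Lemma jump_hit N r El b a (S : nat -> Prop) istar p j :
  (forall j, (j < N)%nat -> 0 < r j < 1) ->
  (istar < N)%nat -> S istar -> (p < N)%nat -> S p -> (j < N)%nat -> j <> p ->
  Jrel N r El b a -> b p = 1 -> a p = 0 -> El p j ->
  syncS N S istar b -> ph (a j) = ph (a istar).
Proof.
  intros Hr Hin Si Hp Sp Hj Hjp HJ Hbp Hap He Hs.
  destruct (Jrel_fire N r El b a p Hr HJ Hp Hbp Hap j Hj Hjp) as [H1 _].
  assert (ph (a j) = 0) by (destruct (H1 He) as [[-> _]|[-> _]]; [apply ph_0|apply ph_1]).
  rewrite H.
  assert (Hbi : ph (b istar) = 0) by (rewrite <- (Hs p Hp Sp), Hbp; apply ph_1).
  destruct (Nat.eq_dec istar p) as [->|Hne]; [rewrite Hap; symmetry; apply ph_0|].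
  destruct (Jrel_fire N r El b a p Hr HJ Hp Hbp Hap istar Hin Hne) as [G1 G2].
  destruct (classic (El p istar)) as [Hpi|Hpi].
  - destruct (G1 Hpi) as [[-> _]|[-> _]]; [symmetry; apply ph_0|symmetry; apply ph_1].
  - rewrite (G2 Hpi). auto.
Qed.

Lemma jump_keep N r El b a (S : nat -> Prop) istar p :
  (forall j, (j < N)%nat -> 0 < r j < 1) ->
  (istar < N)%nat -> S istar -> (p < N)%nat -> S p -> (forall i j, El i j -> S i) ->
  Jrel N r El b a -> ~ (b p = 1 /\ a p = 0) -> syncS N S istar b -> a p = b p.
Proof.
  intros Hr Hin Si Hp Sp Hsrc HJ Hnf Hs.
  destruct HJ as [i0 [Hi0 [Hb [Ha Hj]]]].
  assert (Hne : p <> i0) by (intro; subst; auto).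
  destruct (Hj p Hp Hne) as [H1 H2]. destruct (classic (El i0 p)) as [He|He].
  - assert (Si0 : S i0) by (eapply Hsrc; eauto).
    assert (ph (b p) = 0) by (rewrite (Hs p Hp Sp), <- (Hs i0 Hi0 Si0), Hb; apply ph_1).
    pose proof (Hr p Hp).
    destruct (ph_zero _ H) as [Hz|Hz]; destruct (H1 He) as [[-> ?]|[-> ?]]; lra.
  - apply H2; auto.
Qed.

Lemma sg_mono N T r A B sg El K a b : DiscSys N T r A B sg El K ->
  (a <= b)%nat -> (b <= S K)%nat -> sg a <= sg b.
Proof.
  intros [Hm _] Hab HbK. induction b as [|b IH].
  - assert (a = O) by lia. subst. lra.
  - destruct (Nat.eq_dec a (S b)) as [->|Hne]; [lra|].
    pose proof (Hm b ltac:(lia)). specialize (IH ltac:(lia) ltac:(lia)). lra.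
Qed.

Lemma separation N T r A B sg El K p k1 k2 : 0 < T -> (forall j, (j < N)%nat -> 0 < r j < 1) ->
  DiscSys N T r A B sg El K -> (p < N)%nat -> (k1 < k2)%nat -> (k2 < K)%nat ->
  A (S k1) p = 0 -> B k2 p = 1 -> r p * T <= sg (S k2) - sg (S k1).
Proof.
  intros HT Hr HD Hp H12 H2K HA1 HB2. pose proof HD as [Hm [Hf HJ]].
  assert (Inv : forall d, (S k1 + d <= k2)%nat ->
     B (S k1 + d)%nat p <= (sg (S (S k1 + d)) - sg (S k1)) / T \/ r p * T <= sg (S (S k1 + d)) - sg (S k1)).
  { induction d as [|d IH]; intros Hd.
    - left. rewrite Nat.add_0_r. destruct (Hf (S k1) ltac:(lia) p Hp) as [_ [_ E]]. rewrite E, HA1. lra.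
    - replace (S k1 + S d)%nat with (S (S k1 + d)) by lia.
      set (m := (S k1 + d)%nat) in *.
      specialize (IH ltac:(lia)).
      destruct (Hf m ltac:(lia) p Hp) as [_ [Bm _]].
      destruct (Hf (S m) ltac:(lia) p Hp) as [_ [_ E]].
      pose proof (Hm (S m) ltac:(lia)).
      assert (Hs1 : sg (S k1) <= sg (S m)) by (eapply sg_mono; [exact HD| |]; lia).
      destruct (Jrel_mono N r (El m) (B m) (A (S m)) p (HJ m ltac:(lia)) Hp ltac:(lra)) as [Hle|Hle].
      + rewrite E. destruct IH as [IH|IH].
        * left. replace ((sg (S (S m)) - sg (S k1)) / T) with ((sg (S m) - sg (S k1)) / T + (sg (S (S m)) - sg (S m)) / T) by (field; lra). lra.
        * right. lra.
      + right. destruct IH as [IH|IH]; [|lra].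
        assert (Hq : r p <= (sg (S m) - sg (S k1)) / T) by lra.
        assert (r p * T <= sg (S m) - sg (S k1)).
        { apply Rmult_le_reg_r with (/ T). apply Rinv_0_lt_compat; auto.
          rewrite Rmult_assoc, Rinv_r by lra. rewrite Rmult_1_r. exact Hq. }
        lra. }
  destruct (Inv (k2 - S k1)%nat ltac:(lia)) as [H|H]; replace (S k1 + (k2 - S k1))%nat with k2 in H by lia.
  - rewrite HB2 in H. pose proof (Hr p Hp).
    assert (T <= sg (S k2) - sg (S k1)).
    { apply Rmult_le_reg_r with (/ T). apply Rinv_0_lt_compat; auto.
      rewrite Rinv_r by lra. exact H. }
    nra.
  - exact H.
Qed.

Definition firesb (A B : nat -> nat -> R) (k a : nat) : bool :=
  if Req_dec_T (B k a) 1 then if Req_dec_T (A (S k) a) 0 then true else false else false.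

Lemma firesb_true A B k a : firesb A B k a = true <-> B k a = 1 /\ A (S k) a = 0.
Proof.
  unfold firesb. destruct (Req_dec_T (B k a) 1); destruct (Req_dec_T (A (S k) a) 0); split; intros; try tauto; try discriminate.
Qed.

Fixpoint cnt (f : nat -> bool) (k0 n : nat) : nat :=
  match n with O => O | S n' => (cnt f k0 n' + (if f (k0 + n')%nat then 1 else 0))%nat end.

Fixpoint sumNat (n : nat) (g : nat -> nat) : nat :=
  match n with O => O | S m => (sumNat m g + g m)%nat end.

Lemma sumNat_add n f g : sumNat n (fun a => f a + g a)%nat = (sumNat n f + sumNat n g)%nat.
Proof. induction n; simpl; lia. Qed.

Lemma sumNat_ge1 n g i : (i < n)%nat -> (1 <= g i)%nat -> (1 <= sumNat n g)%nat.
Proof.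
  induction n; simpl; intros Hi Hg; [lia|]. destruct (Nat.eq_dec i n) as [->|]; [lia|].
  specialize (IHn ltac:(lia) Hg). lia.
Qed.

Lemma sumNat_bound n g p Kc : (p < n)%nat -> g p = O -> (forall a, (a < n)%nat -> (g a <= Kc)%nat) ->
  (sumNat n g + Kc <= n * Kc)%nat.
Proof.
  assert (Gen : forall n g, (forall a, (a < n)%nat -> (g a <= Kc)%nat) -> (sumNat n g <= n * Kc)%nat).
  { induction n0; simpl; intros; [lia|]. specialize (IHn0 g0 ltac:(intros; apply H; lia)).
    pose proof (H n0 ltac:(lia)). lia. }
  induction n; simpl; intros Hp Hg HK; [lia|].
  destruct (Nat.eq_dec p n) as [->|Hne].
  - rewrite Hg. pose proof (Gen n g ltac:(intros; apply HK; lia)). lia.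
  - specialize (IHn ltac:(lia) Hg ltac:(intros; apply HK; lia)). pose proof (HK n ltac:(lia)). lia.
Qed.

Lemma span N T r A B sg El K p k0 : 0 < T -> (forall j, (j < N)%nat -> 0 < r j < 1) ->
  DiscSys N T r A B sg El K -> (p < N)%nat ->
  forall n, (k0 + n <= K)%nat -> (1 <= cnt (fun k => firesb A B k p) k0 n)%nat ->
  exists k1 k2, (k0 <= k1)%nat /\ (k1 <= k2)%nat /\ (k2 < k0 + n)%nat /\
    firesb A B k1 p = true /\ firesb A B k2 p = true /\
    INR (cnt (fun k => firesb A B k p) k0 n - 1) * (r p * T) <= sg (S k2) - sg (S k1).
Proof.
  intros HT Hr HD Hp. induction n as [|n IH]; intros Hn Hc; simpl in Hc; [lia|].
  destruct (firesb A B (k0 + n) p) eqn:Hf.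
  - destruct (Nat.eq_dec (cnt (fun k => firesb A B k p) k0 n) O) as [Hz|Hnz].
    + exists (k0 + n)%nat, (k0 + n)%nat. repeat split; try lia; auto.
      simpl. rewrite Hz, Hf. simpl. lra.
    + destruct (IH ltac:(lia) ltac:(lia)) as [k1 [k2 [H1 [H2 [H3 [F1 [F2 Hs]]]]]]].
      exists k1, (k0 + n)%nat. repeat split; try lia; auto.
      simpl. rewrite Hf.
      apply firesb_true in F2. apply firesb_true in Hf.
      pose proof (separation N T r A B sg El K p k2 (k0 + n) HT Hr HD Hp ltac:(lia) ltac:(lia) (proj2 F2) (proj1 Hf)).
      replace (cnt (fun k => firesb A B k p) k0 n + 1 - 1)%nat with (S (cnt (fun k => firesb A B k p) k0 n - 1)) by lia.
      rewrite S_INR. lra.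
  - destruct (IH ltac:(lia) ltac:(lia)) as [k1 [k2 [H1 [H2 [H3 [F1 [F2 Hs]]]]]]].
    exists k1, k2. repeat split; try lia; auto. simpl. rewrite Hf, Nat.add_0_r. exact Hs.
Qed.

Lemma no_long_block N T r A B sg El K p k0 rm Kc : 0 < T -> (forall j, (j < N)%nat -> 0 < r j < 1) ->
  DiscSys N T r A B sg El K -> 0 < rm -> (forall i, (i < N)%nat -> rm <= r i) ->
  1 < INR Kc * rm -> (p < N)%nat -> (k0 + N * Kc <= K)%nat ->
  (forall k, (k0 <= k < k0 + N * Kc)%nat -> ~ (B k p = 1 /\ A (S k) p = 0)) ->
  (forall k, (k0 <= k < k0 + N * Kc)%nat -> sg (S k) <= sg k0 + T) -> False.
Proof.
  intros HT Hr HD Hrm Hrmi HKc Hp HK Hnf Hwin.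
  set (L := (N * Kc)%nat) in *.
  assert (HKc0 : (1 <= Kc)%nat) by (destruct Kc as [|kc]; [simpl in HKc; lra|lia]).
  assert (Hsum : forall n, (n <= L)%nat -> (n <= sumNat N (fun a => cnt (fun k => firesb A B k a) k0 n))%nat).
  { induction n as [|n IH]; intros Hn; [lia|].
    simpl. rewrite sumNat_add. specialize (IH ltac:(lia)).
    assert (1 <= sumNat N (fun a => if firesb A B (k0 + n) a then 1 else 0))%nat.
    { destruct HD as [_ [_ HJ]]. destruct (HJ (k0 + n)%nat ltac:(lia)) as [i [Hi [Hb [Ha _]]]].
      apply (sumNat_ge1 N _ i Hi). assert (firesb A B (k0 + n) i = true) by (apply firesb_true; auto).
      rewrite H. lia. }
    lia. }
  assert (Hp0 : forall n, (n <= L)%nat -> cnt (fun k => firesb A B k p) k0 n = O).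
  { induction n as [|n IH]; intros Hn; simpl; auto. rewrite IH by lia.
    destruct (firesb A B (k0 + n) p) eqn:Hf; auto. apply firesb_true in Hf. exfalso. apply (Hnf (k0 + n)%nat); auto. lia. }
  assert (Hb : forall a, (a < N)%nat -> (cnt (fun k => firesb A B k a) k0 L <= Kc)%nat).
  { intros a Ha. apply Nat.nlt_ge. intro Hlt.
    destruct (span N T r A B sg El K a k0 HT Hr HD Ha L ltac:(lia) ltac:(lia)) as [k1 [k2 [H1 [H2 [H3 [F1 [F2 Hs]]]]]]].
    assert (INR Kc <= INR (cnt (fun k => firesb A B k a) k0 L - 1)) by (apply le_INR; lia).
    assert (sg k0 <= sg (S k1)) by (eapply sg_mono; [exact HD| |]; lia).
    pose proof (Hwin k2 ltac:(lia)).
    pose proof (Hrmi a Ha). pose proof (pos_INR Kc).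
    assert (INR Kc * (rm * T) <= INR (cnt (fun k => firesb A B k a) k0 L - 1) * (r a * T)).
    { apply Rmult_le_compat; try lra. apply Rmult_le_pos; lra. apply Rmult_le_compat_r; lra. }
    assert (INR Kc * (rm * T) <= T) by lra.
    assert (INR Kc * rm * T > 1 * T) by (apply Rmult_gt_compat_r; lra). nra. }
  pose proof (Hsum L (le_n L)).
  pose proof (sumNat_bound N (fun a => cnt (fun k => firesb A B k a) k0 L) p Kc Hp (Hp0 L (le_n L)) Hb).
  unfold L in *. lia.
Qed.

Lemma flow_sync N T r A B sg El K Sx istar k : 0 < T -> DiscSys N T r A B sg El K -> (k <= K)%nat ->
  (istar < N)%nat -> syncS N Sx istar (A k) -> syncS N Sx istar (B k).
Proof.
  intros HT HD Hk Hi Hs c Hc Sc. eapply flow_ph; eauto.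
Qed.

Lemma sync_step N T r A B sg El K Sx istar k : 0 < T -> DiscSys N T r A B sg El K -> (k < K)%nat ->
  (istar < N)%nat -> Sx istar -> (forall i j, El k i j -> Sx i) ->
  syncS N Sx istar (A k) -> syncS N Sx istar (A (S k)).
Proof.
  intros HT HD Hk Hi Si Hsrc Hs. pose proof HD as [_ [Hf HJ]].
  eapply jump_sync; eauto.
  - intros i Hi'. apply (Hf k ltac:(lia) i Hi').
  - eapply flow_sync; eauto. lia.
Qed.

Lemma sync_range N T r A B sg El K Sx istar k1 : 0 < T -> DiscSys N T r A B sg El K ->
  (istar < N)%nat -> Sx istar ->
  forall d, (k1 + d <= K)%nat -> (forall k, (k1 <= k < k1 + d)%nat -> forall i j, El k i j -> Sx i) ->
  syncS N Sx istar (A k1) -> syncS N Sx istar (A (k1 + d)%nat).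
Proof.
  intros HT HD Hi Si. induction d as [|d IH]; intros Hd Hsrc Hs.
  - rewrite Nat.add_0_r. auto.
  - replace (k1 + S d)%nat with (S (k1 + d)) by lia.
    apply (sync_step N T r A B sg El K Sx istar (k1 + d)%nat HT HD ltac:(lia) Hi Si).
    + intros i j He. apply (Hsrc (k1 + d)%nat ltac:(lia) i j He).
    + apply IH; [lia| intros k Hk; apply Hsrc; lia | auto].
Qed.

Lemma block N T r A B sg El K istar (Cq Cn Vq : nat -> Prop) (EE : nat -> nat -> Prop) kb rm Kc :
  0 < T -> (forall j, (j < N)%nat -> 0 < r j < 1) -> DiscSys N T r A B sg El K ->
  0 < rm -> (forall i, (i < N)%nat -> rm <= r i) -> 1 < INR Kc * rm ->
  (istar < N)%nat -> Cq istar -> (forall i, Vq i -> Cq i) ->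
  (forall k, (kb <= k < kb + N * Kc)%nat -> forall i j, El k i j <-> (Vq i /\ EE i j)) ->
  (forall c, (c < N)%nat -> Cn c -> Cq c \/ exists p, (p < N)%nat /\ Vq p /\ EE p c) ->
  (kb + N * Kc <= K)%nat ->
  syncS N Cq istar (A kb) -> syncS N Cn istar (A (kb + N * Kc)%nat).
Proof.
  intros HT Hr HD Hrm Hrmi HKc Hi Ci HVC HEl HCn HK Hs.
  pose proof HD as [Hm [Hf HJ]].
  set (L := (N * Kc)%nat) in *.
  assert (Hsrc : forall k, (kb <= k < kb + L)%nat -> forall i j, El k i j -> Cq i).
  { intros k Hk i j He. apply HVC. apply (HEl k Hk i j) in He. tauto. }
  assert (Ha : forall d, (d <= L)%nat -> syncS N Cq istar (A (kb + d)%nat)).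
  { intros d Hd. apply sync_range with (sg := sg) (B := B) (El := El) (K := K) (T := T) (r := r); auto; try lia.
    intros k Hk; apply Hsrc; lia. }
  assert (Hfire : forall p, (p < N)%nat -> Vq p -> exists k, (kb <= k < kb + L)%nat /\ B k p = 1 /\ A (S k) p = 0).
  { intros p Hp Vp. apply NNPP. intro Hn.
    assert (Hnf : forall k, (kb <= k < kb + L)%nat -> ~ (B k p = 1 /\ A (S k) p = 0)).
    { intros k Hk Hc. apply Hn. exists k. auto. }
    assert (Hval : forall d, (d <= L)%nat -> A (kb + d)%nat p = A kb p + (sg (kb + d)%nat - sg kb) / T).
    { induction d as [|d IH]; intros Hd.
      - rewrite Nat.add_0_r. field. lra.
      - replace (kb + S d)%nat with (S (kb + d)) by lia.
        rewrite (jump_keep N r (El (kb + d)%nat) (B (kb + d)%nat) (A (S (kb + d))) Cq istar p Hr Hi Ci Hp (HVC p Vp)).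
        + destruct (Hf (kb + d)%nat ltac:(lia) p Hp) as [_ [_ E]]. rewrite E, IH by lia. field. lra.
        + intros i j He. apply (Hsrc (kb + d)%nat ltac:(lia) i j He).
        + apply HJ. lia.
        + apply Hnf. lia.
        + apply (flow_sync N T r A B sg El K Cq istar (kb + d)%nat HT HD ltac:(lia) Hi). apply Ha. lia. }
    apply (no_long_block N T r A B sg El K p kb rm Kc); auto.
    intros k Hk. destruct (Hf k ltac:(lia) p Hp) as [H0 [H1 E]].
    pose proof (Hval (k - kb)%nat ltac:(lia)) as Hv. replace (kb + (k - kb))%nat with k in Hv by lia.
    rewrite Hv in E. destruct (Hf kb ltac:(lia) p Hp) as [H2 _].
    assert ((sg (S k) - sg kb) / T <= 1) by lra.
    assert (sg (S k) - sg kb <= T).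
    { apply Rmult_le_reg_r with (/ T). apply Rinv_0_lt_compat; auto. rewrite Rinv_r by lra. exact H. }
    lra. }
  intros c Hc Cc.
  destruct (HCn c Hc Cc) as [Cqc|[p [Hp [Vp Ep]]]].
  { apply Ha; auto. }
  destruct (classic (Cq c)) as [Cqc|Ncq]; [apply Ha; auto|].
  destruct (Hfire p Hp Vp) as [k [Hk [Hb1 Ha0]]].
  assert (Hne : c <> p) by (intro; subst; apply Ncq; apply HVC; auto).
  assert (Hhit : ph (A (S k) c) = ph (A (S k) istar)).
  { apply (jump_hit N r (El k) (B k) (A (S k)) Cq istar p c Hr Hi Ci Hp (HVC p Vp) Hc Hne); auto.
    - apply HJ. lia.
    - apply HEl; auto.
    - apply (flow_sync N T r A B sg El K Cq istar k HT HD ltac:(lia) Hi).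
      replace k with (kb + (k - kb))%nat by lia. apply Ha. lia. }
  set (S' := fun x => Cq x \/ x = c).
  assert (HS : syncS N S' istar (A (S k))).
  { intros c' Hc' [HC| ->]; auto. replace (S k) with (kb + (S k - kb))%nat by lia. apply Ha; auto. lia. }
  pose proof (sync_range N T r A B sg El K S' istar (S k) HT HD Hi (or_introl Ci) (kb + L - S k)%nat ltac:(lia)) as HR.
  replace (S k + (kb + L - S k))%nat with (kb + L)%nat in HR by lia.
  apply (HR ltac:(intros k' Hk' i j He; left; apply (Hsrc k' ltac:(lia) i j He)) HS c Hc). right; auto.
Qed.

Lemma sync_all N E T r A B sg El K istar qs k0 rm Kc :
  0 < T -> (forall j, (j < N)%nat -> 0 < r j < 1) -> simple_digraph N E ->
  is_root N E istar -> is_qstar N E istar qs -> DiscSys N T r A B sg El K ->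
  0 < rm -> (forall i, (i < N)%nat -> rm <= r i) -> 1 < INR Kc * rm ->
  (forall q m, (q < qs)%nat -> (m < N * Kc)%nat -> forall a b,
      El (k0 + q * (N * Kc) + m)%nat a b <-> Gq N E istar q a b) ->
  (k0 + qs * (N * Kc) <= K)%nat ->
  forall c, (c < N)%nat -> ph (B K c) = ph (B K istar).
Proof.
  intros HT Hr Hs Hroot Hqs HD Hrm Hrmi HKc HEl HK.
  assert (Hi : (istar < N)%nat) by (destruct Hroot; auto).
  set (L := (N * Kc)%nat) in *.
  assert (Step1 : forall q, (q <= qs)%nat -> syncS N (Cq E istar q) istar (A (k0 + q * L)%nat)).
  { induction q as [|q IH]; intros Hq.
    - intros c Hc Cc. rewrite (Cq0 E istar c Cc). auto.
    - replace (k0 + S q * L)%nat with (k0 + q * L + N * Kc)%nat by (unfold L; lia).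
      apply (block N T r A B sg El K istar (Cq E istar q) (Cq E istar (S q)) (in_Vq N E istar q) E
               (k0 + q * L)%nat rm Kc HT Hr HD Hrm Hrmi HKc Hi).
      + exact (Cq_istar E istar q).
      + intros i Hv. exact (in_Vq_Cq N E istar q i Hv).
      + intros k Hk i j. replace k with (k0 + q * L + (k - (k0 + q * L)))%nat by (unfold L in *; lia).
        rewrite HEl by (unfold L in *; lia). unfold Gq. tauto.
      + intros c Hc Cc. destruct (classic (Cq E istar q c)) as [H|H]; [left; auto|right].
        destruct (Cq_step N E istar q c Hs Hc Cc H) as [p [Hp [Hv Ep]]]. exists p. auto.
      + assert (HH : (S q * L <= qs * L)%nat) by (apply Nat.mul_le_mono_r; lia).
        simpl in HH. unfold L in *. lia.
      + apply IH. lia. }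
  assert (Step2 : syncS N (fun _ => True) istar (A (k0 + qs * L)%nat)).
  { intros c Hc _. apply Step1; auto. apply (Cq_all N E istar qs c Hroot Hqs Hc). }
  assert (Step3 : syncS N (fun _ => True) istar (A K)).
  { pose proof (sync_range N T r A B sg El K (fun _ => True) istar (k0 + qs * L)%nat HT HD Hi I
      (K - (k0 + qs * L))%nat ltac:(lia) (fun _ _ _ _ _ => I) Step2) as H.
    replace (k0 + qs * L + (K - (k0 + qs * L)))%nat with K in H by lia. exact H. }
  intros c Hc. apply (flow_sync N T r A B sg El K (fun _ => True) istar K HT HD (le_n K) Hi Step3 c Hc I).
Qed.

Lemma phases_in_As N tau i0 : (i0 < N)%nat -> (forall i, (i < N)%nat -> 0 <= tau i <= 1) ->
  (forall c, (c < N)%nat -> ph (tau c) = ph (tau i0)) -> in_As N tau.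
Proof.
  intros Hi0 Hr Hp.
  destruct (classic (exists c, (c < N)%nat /\ tau c <> 0 /\ tau c <> 1)) as [[c [Hc [H0 H1]]]|Hno].
  - left. exists (tau c). split; [apply Hr; auto|]. intros j Hj.
    assert (E : ph (tau j) = ph (tau c)) by (rewrite (Hp j Hj), (Hp c Hc); auto).
    rewrite (ph_ne1 (tau c)) in E by auto.
    destruct (Req_dec (tau j) 1) as [He|He].
    + rewrite He, ph_1 in E. congruence.
    + rewrite ph_ne1 in E; auto.
  - right. intros i Hi. destruct (Req_dec (tau i) 0); auto. destruct (Req_dec (tau i) 1); auto.
    exfalso. apply Hno. exists i. auto.
Qed.

Lemma minR_le n r acc i : (i < n)%nat -> minR n r acc <= r i.
Proof.
  induction n as [|m IH]; simpl; intros Hi; [lia|].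
  destruct (Nat.eq_dec i m) as [->|Hne]; [apply Rmin_r|].
  eapply Rle_trans; [apply Rmin_l| apply IH; lia].
Qed.

Lemma minR_pos n r acc : 0 < acc -> (forall i, (i < n)%nat -> 0 < r i) -> 0 < minR n r acc.
Proof.
  induction n as [|m IH]; simpl; intros Ha Hr; auto.
  apply Rmin_pos; [apply IH; auto| apply Hr; lia].
Qed.

Lemma Kc_prop rm : 0 < rm -> 1 < INR (Z.to_nat (Int_part (/ rm)) + 1) * rm.
Proof.
  intros Hrm. unfold Int_part. destruct (archimed (/ rm)) as [H1 H2].
  assert (Hinv : 0 < / rm) by (apply Rinv_0_lt_compat; auto).
  assert (Hup : (0 < up (/ rm))%Z) by (apply lt_IZR; lra).
  rewrite plus_INR, INR_IZR_INZ, Z2Nat.id by lia. rewrite minus_IZR. simpl.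
  assert (/ rm * rm = 1) by (field; lra).
  nra.
Qed.

Lemma final_zero N E T r xi x dom t K istar qs P :
  0 < T -> (forall j, (j < N)%nat -> 0 < r j < 1) -> simple_digraph N E ->
  is_root N E istar -> is_qstar N E istar qs -> is_solution N T r xi x dom -> dom t K ->
  zeta_at N E r istar qs xi P -> (snd (x 0%R O) <= P)%nat ->
  (P + qs * lstar N r <= snd (x 0%R O) + K)%nat -> distA N (x t K) = 0.
Proof.
  intros HT Hr Hs Hroot Hqs Hsol Hd HZ HP HK.
  assert (Hi : (istar < N)%nat) by (destruct Hroot; auto).
  destruct (discretize N T r xi x dom t K HT Hr Hsol Hd) as [sg [Hs0 [HsK [Hm [Hfl Hj]]]]].
  set (l0 := snd (x 0%R O)) in *.
  set (A := fun k => fst (x (sg k) k)).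
  set (B := fun k => fst (x (sg (S k)) k)).
  set (El := fun k => xi (l0 + k)%nat).
  assert (HD : DiscSys N T r A B sg El K).
  { split; [exact Hm|]. split; [exact Hfl|]. intros k Hk. apply (Hj k Hk). }
  set (rm := rmin N r).
  set (Kc := (Z.to_nat (Int_part (/ rm)) + 1)%nat).
  assert (HL : lstar N r = (N * Kc)%nat) by reflexivity.
  assert (Hrm : 0 < rm).
  { unfold rm, rmin. apply minR_pos. apply Hr. lia. intros; apply Hr; auto. }
  assert (Hrmi : forall i, (i < N)%nat -> rm <= r i) by (intros; apply minR_le; auto).
  pose proof (Kc_prop rm Hrm) as HKc. fold Kc in HKc.
  assert (Hsync := sync_all N E T r A B sg El K istar qs (P - l0)%nat rm Kc HT Hr Hs Hroot Hqs HD Hrm Hrmi HKc).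
  rewrite HL in HK.
  assert (HP2 : forall c, (c < N)%nat -> ph (B K c) = ph (B K istar)).
  { assert (HEl : forall q m, (q < qs)%nat -> (m < N * Kc)%nat -> forall a b,
      El (P - l0 + q * (N * Kc) + m)%nat a b <-> Gq N E istar q a b).
    { intros q m Hq Hm' a b. unfold El.
      replace (l0 + (P - l0 + q * (N * Kc) + m))%nat with (P + q * lstar N r + m)%nat by (rewrite HL; lia).
      apply HZ; auto. }
    exact (Hsync HEl ltac:(lia)). }
  apply distA_zero. rewrite <- HsK.
  apply (phases_in_As N (B K) istar Hi); auto.
  intros i Hi'. apply (Hfl K (le_n K) i Hi').
Qed.

Lemma time_bound N T r xi x dom t K : (0 < N)%nat -> 0 < T -> (forall j, (j < N)%nat -> 0 < r j < 1) ->
  is_solution N T r xi x dom -> dom t K -> t <= INR (S K) * T.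
Proof.
  intros HN HT Hr Hsol Hd.
  destruct (discretize N T r xi x dom t K HT Hr Hsol Hd) as [sg [Hs0 [HsK [Hm [Hfl Hj]]]]].
  assert (H : forall k, (k <= K)%nat -> sg (S k) <= INR (S k) * T).
  { induction k as [|k IH]; intros Hk.
    - destruct (Hfl O ltac:(lia) O HN) as [[H1 H2] [[H3 H4] E]].
      assert ((sg 1%nat - sg O) / T <= 1) by lra.
      assert (sg 1%nat - sg O <= T).
      { apply Rmult_le_reg_r with (/ T). apply Rinv_0_lt_compat; auto. rewrite Rinv_r by lra. exact H. }
      rewrite Hs0 in H0. simpl. lra.
    - destruct (Hfl (S k) Hk O HN) as [[H1 H2] [[H3 H4] E]].
      assert ((sg (S (S k)) - sg (S k)) / T <= 1) by lra.
      assert (sg (S (S k)) - sg (S k) <= T).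
      { apply Rmult_le_reg_r with (/ T). apply Rinv_0_lt_compat; auto. rewrite Rinv_r by lra. exact H. }
      specialize (IH ltac:(lia)). rewrite (S_INR (S k)). lra. }
  rewrite <- HsK. apply H. lia.
Qed.

Theorem theorem2 (N : nat) (E : nat -> nat -> Prop) (T : R) (r : nat -> R)
    (xi : nat -> nat -> nat -> Prop) :
  simple_digraph N E -> rooted N E -> 0 < T ->
  (forall i, (i < N)%nat -> 0 < r i < 1) ->
  in_Xi E xi ->
  (contains_io N E r xi -> UGS N T r xi /\ GFTA N T r xi) /\
  (contains_uio N E r xi -> UGS N T r xi /\ GFxTA N T r xi).
Proof.
  intros Hs Hroot HT Hr _.
  assert (HN : (0 < N)%nat) by (destruct Hroot as [i [Hi _]]; lia).
  assert (HL1 : (1 <= lstar N r)%nat) by (unfold lstar; destruct N; [lia|]; simpl; lia).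
  split.
  - intros [istar [qs [Hrt [Hqs [pos [Hpos HZ]]]]]]. split; [apply UGS_holds; auto|].
    set (Pf := fun l0 : nat => if Nat.eq_dec qs O then l0 else pos l0).
    assert (HPf : forall l0, (l0 <= Pf l0)%nat /\ zeta_at N E r istar qs xi (Pf l0)).
    { intros l0. unfold Pf. destruct (Nat.eq_dec qs O) as [->|Hq].
      - split; auto. intros q m Hq. lia.
      - split; auto.
        assert (Hge : forall n, (n <= pos n)%nat).
        { induction n as [|n IH]; [lia|]. pose proof (Hpos n).
          assert (1 <= qs * lstar N r)%nat by (destruct qs; [lia|]; simpl; lia). lia. }
        apply Hge. }
    exists (fun x0 => (INR (Pf (snd x0) + qs * lstar N r - snd x0) + 1) * (T + 1)).
    intros x dom Hsol. split.
    { pose proof (pos_INR (Pf (snd (x 0%R O)) + qs * lstar N r - snd (x 0%R O))). nra. }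
    intros t K Hd HT'.
    destruct (HPf (snd (x 0%R O))) as [Hle HZ'].
    apply (final_zero N E T r xi x dom t K istar qs (Pf (snd (x 0%R O)))); auto.
    apply Nat.nlt_ge. intro Hlt.
    pose proof (time_bound N T r xi x dom t K HN HT Hr Hsol Hd).
    assert (INR (S K) <= INR (Pf (snd (x 0%R O)) + qs * lstar N r - snd (x 0%R O))) by (apply le_INR; lia).
    rewrite S_INR in *. pose proof (pos_INR K). nra.
  - intros [istar [qs [Hrt [Hqs [n [Hn Hw]]]]]]. split; [apply UGS_holds; auto|].
    exists ((INR n + 1) * (T + 1)). split.
    { pose proof (pos_INR n). nra. }
    intros x dom Hsol t K Hd HT'.
    destruct (Hw (snd (x 0%R O))) as [p [Hp1 [Hp2 HZ]]].
    apply (final_zero N E T r xi x dom t K istar qs p); auto.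
    apply Nat.nlt_ge. intro Hlt.
    pose proof (time_bound N T r xi x dom t K HN HT Hr Hsol Hd).
    assert (INR (S K) <= INR n) by (apply le_INR; lia).
    rewrite S_INR in *. pose proof (pos_INR K). nra.
Qed.
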